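(* Let $K$ be a clique simplicial complex, $X\cup Y=K_0$ a cover of its vertex set, $A:=X\cap Y$, and $P:=\{\sigma\in K\mid\sigma\subset X\text{ or }\sigma\subset Y\text{ or }\sigma\cap A\neq\emptyset\}$. Assume there are two elements $a_X,a_Y\in A$ such that: (i) for every edge $\tau\in K_1$ with $|\tau\cap A|=1$ and $|\tau\cap(X\setminus A)|=1$, the set $\tau\cup\{a_X\}$ is a simplex of $K$; (ii) for every edge $\tau\in K_1$ with $|\tau\cap A|=1$ and $|\tau\cap(Y\setminus A)|=1$, the set $\tau\cup\{a_Y\}$ is a simplex of $K$; (iii) for every edge $\tau\in K_1\setminus P$, the set $\tau\cup\{a_X,a_Y\}$ is a simplex of $K$. Then for every $\sigma\in K\setminus P$, the set $\{a_X,a_Y\}$ is a central simplex of $\mathrm{St}(\sigma,A)$, and the inclusion $K_X\cup K_Y\subset K$ is a weak equivalence.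
   Context: A simplicial complex is a collection of finite nonempty subsets of a fixed set closed under taking nonempty subsets; $K_0$ is its vertex set, $K_1$ its set of edges, $K_B$ the subcomplex of simplices contained in $B$. $K$ is clique if a set with at least two elements is a simplex iff all its two-element subsets are simplices. $\mathrm{St}(\sigma,A):=\{\mu\subset A\mid 0<|\mu|<\infty,\ \mu\cup\sigma\in K\}$. A simplex $\tau$ of a complex $L$ is central if $\sigma\cup\tau\in L$ for every simplex $\sigma$ of $L$. Homotopical notions refer to geometric realizations. *)

(* Defs.v *)
From HB Require Import structures.
From mathcomp Require Import all_boot all_order all_algebra.
From mathcomp Require Import finmap.
From mathcomp Require Import all_classical all_reals all_analysis.
Set Implicit Arguments. Unset Strict Implicit. Unset Printing Implicit Defensive.
Import Order.TTheory GRing.Theory Num.Theory.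
Import numFieldNormedType.Exports.
Local Open Scope classical_set_scope.
Local Open Scope ring_scope.

Section Complexes.
Variable V : choiceType.

Definition is_complex (K : set {fset V}) : Prop :=
  (forall s, K s -> s != fset0) /\
  (forall s t, K s -> fsubset t s -> t != fset0 -> K t).

Definition is_clique (K : set {fset V}) : Prop :=
  forall s : {fset V}, (2 <= #|` s|)%N ->
    (K s <-> forall u w, u \in s -> w \in s -> u != w -> K [fset u; w]%fset).

Definition vertices (K : set {fset V}) : set V := [set v | K [fset v]%fset].

Definition edge (K : set {fset V}) (t : {fset V}) : Prop := K t /\ #|` t| = 2%N.

Definition fsub_in (s : {fset V}) (B : set V) : Prop := forall x, x \in s -> B x.

Definition full_sub (K : set {fset V}) (B : set V) : set {fset V} :=
  [set s | K s /\ fsub_in s B].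

Definition card_in (t : {fset V}) (B : set V) : nat := #|` [fset x in t | `[< B x >]]%fset|.

Definition St (K : set {fset V}) (sigma : {fset V}) (A : set V) : set {fset V} :=
  [set mu | mu != fset0 /\ fsub_in mu A /\ K (fsetU mu sigma)].

Definition central (L : set {fset V}) (tau : {fset V}) : Prop :=
  L tau /\ forall s, L s -> L (fsetU s tau).

Definition Pset (K : set {fset V}) (X Y : set V) : set {fset V} :=
  [set s | K s /\ (fsub_in s X \/ fsub_in s Y \/ exists a, a \in s /\ (X `&` Y) a)].

(** Geometric realization.  Points of |K| are functions alpha : V -> R
    (barycentric coordinates) supported on a simplex, nonnegative, summing to 1. *)
Variable R : realType.

Definition closed_simplex (S : {fset V}) : set (V -> R) :=
  [set alpha | (forall v, v \notin S -> alpha v = 0) /\ (forall v, 0 <= alpha v) /\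
               \sum_(v <- S) alpha v = 1].

Definition realization (K : set {fset V}) : set (V -> R) :=
  [set alpha | exists S, K S /\ closed_simplex S alpha].

(* open sets of the weak (CW / coherent) topology on |K|: U is open iff its
   trace on every closed simplex |S| is open for the Euclidean topology of |S| *)
Definition weak_open (K : set {fset V}) (U : set (V -> R)) : Prop :=
  U `<=` realization K /\
  forall S, K S -> forall alpha, closed_simplex S alpha -> U alpha ->
    exists2 e : R, 0 < e & forall beta, closed_simplex S beta ->
      (forall v, v \in S -> `|beta v - alpha v| < e) -> U beta.

(* f : T -> (V -> R), defined on D, is a continuous map D -> |K|
   (D with the subspace topology of T, |K| with the weak topology) *)
Definition cont_into {T : topologicalType} (K : set {fset V}) (D : set T)
    (f : T -> V -> R) : Prop :=
  (forall t, D t -> realization K (f t)) /\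
  forall U, weak_open K U -> exists O : set T, open O /\ O `&` D = f @^-1` U `&` D.

Definition cube (n : nat) : set 'rV[R]_n := [set x | forall i, 0 <= x ord0 i <= 1].
Definition bdry (n : nat) : set 'rV[R]_n :=
  [set x | cube x /\ exists i, x ord0 i = 0 \/ x ord0 i = 1].
Definition cubeI (n : nat) : set ('rV[R]_n * R) := [set p | cube p.1 /\ 0 <= p.2 <= 1].

(* representatives of pi_n(|K|, b): maps (I^n, dI^n) -> (|K|, b) *)
Definition nloop (K : set {fset V}) (n : nat) (b : V -> R) (f : 'rV[R]_n -> V -> R) : Prop :=
  cont_into K (@cube n) f /\ forall x, bdry x -> f x = b.

Definition homot_rel (K : set {fset V}) (n : nat) (b : V -> R) (f g : 'rV[R]_n -> V -> R)
  : Prop :=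
  exists H : 'rV[R]_n * R -> V -> R,
    cont_into K (@cubeI n) H /\
    (forall x, cube x -> H (x, 0) = f x /\ H (x, 1) = g x) /\
    (forall x t, bdry x -> 0 <= t <= 1 -> H (x, t) = b).

(* The inclusion |L| -> |K| (L a subcomplex of K) is a weak equivalence:
   it induces a bijection on pi_0 and, for every n and every basepoint b in |L|,
   a bijection pi_n(|L|, b) -> pi_n(|K|, b)  (for n = 0, I^0 is a point with
   empty boundary, so pi_0 is the set of path components). *)
Definition incl_weak_equiv (L K : set {fset V}) : Prop :=
  (forall alpha, realization K alpha -> exists2 beta, realization L beta &
      homot_rel K beta (fun _ : 'rV[R]_0 => alpha) (fun _ => beta)) /\
  forall (n : nat) (b : V -> R), realization L b ->
    (forall f, nloop K b f -> exists2 g, nloop L (n := n) b g & homot_rel K b f g) /\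
    (forall f g : 'rV[R]_n -> V -> R, nloop L b f -> nloop L b g ->
        homot_rel K b f g -> homot_rel L b f g).

End Complexes.

(* Main.v *)
Require Import Defs.
From HB Require Import structures.
From mathcomp Require Import all_boot all_order all_algebra.
From mathcomp Require Import finmap.
From mathcomp Require Import all_classical all_reals all_analysis.
Import Order.TTheory GRing.Theory Num.Theory.
Import numFieldNormedType.Exports.
Local Open Scope classical_set_scope.
Local Open Scope ring_scope.
Set Implicit Arguments. Unset Strict Implicit. Unset Printing Implicit Defensive.
From mathcomp Require Import ring lra.
Section Comb.
Variables (V : choiceType) (K : set {fset V}) (X Y : set V) (aX aY : V).
Hypotheses (HK : is_complex K) (HKc : is_clique K) (HXY : X `|` Y = vertices K)
  (HaX : (X `&` Y) aX) (HaY : (X `&` Y) aY)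
  (H1 : forall tau, edge K tau -> card_in tau (X `&` Y) = 1%N ->
     card_in tau (X `\` (X `&` Y)) = 1%N -> K (fsetU tau [fset aX]%fset))
  (H2 : forall tau, edge K tau -> card_in tau (X `&` Y) = 1%N ->
     card_in tau (Y `\` (X `&` Y)) = 1%N -> K (fsetU tau [fset aY]%fset))
  (H3 : forall tau, edge K tau -> ~ Pset K X Y tau -> K (fsetU tau [fset aX; aY]%fset)).

Lemma K_sub s t : K s -> fsubset t s -> t != fset0 -> K t.
Proof. by move=> Ks ts t0; exact: HK.2 Ks ts t0. Qed.

Lemma K_vert s v : K s -> v \in s -> X v \/ Y v.
Proof.
move=> Ks vs; have : vertices K v.
  apply: K_sub Ks _ _; first by rewrite fsub1set.
  by apply/eqP => /fsetP /(_ v); rewrite !inE eqxx.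
by rewrite -HXY.
Qed.

Lemma K_edge s u w : K s -> u \in s -> w \in s -> K [fset u; w]%fset.
Proof.
move=> Ks us ws; apply: K_sub Ks _ _.
  by apply/fsubsetP => z; rewrite !inE => /orP[]/eqP->.
by apply/eqP => /fsetP /(_ u); rewrite !inE eqxx.
Qed.

Lemma K_vertex v : (X `|` Y) v -> K [fset v]%fset.
Proof. by rewrite HXY. Qed.

Lemma clique_build s : (2 <= #|` s|)%N ->
  (forall u w, u \in s -> w \in s -> u != w -> K [fset u; w]%fset) -> K s.
Proof. by move=> h2 H; apply: (proj2 (HKc h2)); exact: H. Qed.

Lemma card_in2 (B : set V) u w : B u -> ~ B w -> card_in [fset u; w]%fset B = 1%N.
Proof.
move=> Bu Bw; rewrite /card_in.
have -> : [fset x in [fset u; w]%fset | `[< B x >]]%fset = [fset u]%fset.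
  apply/fsetP => z; rewrite !inE; apply/idP/idP.
    by case/andP => /orP[/eqP->|/eqP->] /asboolP.
  by move/eqP ->; rewrite eqxx /=; apply/asboolP.
by rewrite cardfs1.
Qed.

Lemma card_in2' (B : set V) u w : ~ B u -> B w -> card_in [fset u; w]%fset B = 1%N.
Proof.
move=> Bu Bw; rewrite (_ : [fset u; w]%fset = [fset w; u]%fset); first by apply: card_in2.
by apply/fsetP=> z; rewrite !inE orbC.
Qed.

Lemma edge2 s u w : K s -> u \in s -> w \in s -> u != w -> edge K [fset u; w]%fset.
Proof. by move=> Ks us ws uw; split; [exact: K_edge Ks us ws| rewrite cardfs2 uw]. Qed.


Lemma central_key sigma mu : K sigma -> ~ Pset K X Y sigma ->
  fsub_in mu (X `&` Y) -> K (fsetU mu sigma) ->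
  K (fsetU (fsetU mu [fset aX; aY]%fset) sigma).
Proof.
move=> Ks nP muA Kms.
have nA : forall a, a \in sigma -> ~ (X `&` Y) a.
  by move=> a asg Aa; apply: nP; split => //; right; right; exists a.
have [x xs [Yx nXx]] : exists2 x, x \in sigma & (Y x /\ ~ X x).
  apply: contrapT => hn; apply: nP; split => //; left => z zs.
  apply: contrapT => nXz; apply: hn; exists z => //; split => //.
  by case: (K_vert Ks zs).
have [y ys [Xy nYy]] : exists2 y, y \in sigma & (X y /\ ~ Y y).
  apply: contrapT => hn; apply: nP; split => //; right; left => z zs.
  apply: contrapT => nYz; apply: hn; exists z => //; split => //.
  by case: (K_vert Ks zs).
have xy : x != y by apply/eqP => exy; apply: nXx; rewrite exy.
have Fs : forall v, v \in sigma -> K (fsetU [fset v]%fset [fset aX; aY]%fset).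
  move=> v vs.
  have [[Xv nYv] | [Yv nXv]] : (X v /\ ~ Y v) \/ (Y v /\ ~ X v).
  - case: (K_vert Ks vs) => h; [left|right]; split => //; move=> h'; by apply: (nA v vs).
  - have vx : v != x by apply/eqP => e; apply: nXx; rewrite -e.
    have Kt : K (fsetU [fset v; x]%fset [fset aX; aY]%fset).
      apply: H3 (edge2 Ks vs xs vx) _.
      case=> _ [] ; [move=> /(_ x); rewrite !inE eqxx orbT => /(_ isT) //
             | case; [move=> /(_ v); rewrite !inE eqxx => /(_ isT) //|]].
      by case=> a [] ; rewrite !inE => /orP[]/eqP-> /nA; apply.
    apply: K_sub Kt _ _.
      by apply/fsubsetP => z; rewrite !inE => /orP[->|->]; rewrite ?orbT.
    by apply/eqP => /fsetP /(_ v); rewrite !inE eqxx.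
  - have vy : v != y by apply/eqP => e; apply: nYy; rewrite -e.
    have Kt : K (fsetU [fset v; y]%fset [fset aX; aY]%fset).
      apply: H3 (edge2 Ks vs ys vy) _.
      case=> _ [] ; [move=> /(_ v); rewrite !inE eqxx => /(_ isT) //
             | case; [move=> /(_ y); rewrite !inE eqxx orbT => /(_ isT) //|]].
      by case=> a [] ; rewrite !inE => /orP[]/eqP-> /nA; apply.
    apply: K_sub Kt _ _.
      by apply/fsubsetP => z; rewrite !inE => /orP[->|->]; rewrite ?orbT.
    by apply/eqP => /fsetP /(_ v); rewrite !inE eqxx.
have ms : forall m, m \in mu -> m \in fsetU mu sigma.
  by move=> m mm; rewrite inE mm.
have ss : forall m, m \in sigma -> m \in fsetU mu sigma.
  by move=> m mm; rewrite inE mm orbT.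
have Fm : forall m, m \in mu -> K [fset m; aX]%fset /\ K [fset m; aY]%fset.
  move=> m mm; have Am := muA m mm.
  have my : m != y by apply/eqP => e; apply: nYy; rewrite -e; case: Am.
  have mx : m != x by apply/eqP => e; apply: nXx; rewrite -e; case: Am.
  have e1 := edge2 Kms (ms m mm) (ss y ys) my.
  have e2 := edge2 Kms (ms m mm) (ss x xs) mx.
  have k1 : K (fsetU [fset m; y]%fset [fset aX]%fset).
    apply: H1 e1 _ _; first by apply: card_in2 => // -[].
    apply: card_in2' => //; first by case=> _; apply.
    by split => // -[].
  have k2 : K (fsetU [fset m; x]%fset [fset aY]%fset).
    apply: H2 e2 _ _; first by apply: card_in2 => // -[].
    apply: card_in2' => //; first by case=> _; apply.
    by split => // -[].
  split; [apply: K_edge k1 _ _ | apply: K_edge k2 _ _]; by rewrite !inE eqxx ?orbT.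
have hc : forall z c, z \in fsetU (fsetU mu [fset aX; aY]%fset) sigma ->
    (c = aX \/ c = aY) -> K [fset z; c]%fset.
  move=> z c; rewrite !inE => /orP[/orP[zm|/orP[/eqP->|/eqP->]]|zs] hcX.
  - by case: hcX => ->; case: (Fm z zm).
  - have := Fs x xs; case: hcX => -> Kt; apply: K_edge Kt _ _; by rewrite !inE eqxx ?orbT.
  - have := Fs x xs; case: hcX => -> Kt; apply: K_edge Kt _ _; by rewrite !inE eqxx ?orbT.
  - have := Fs z zs; case: hcX => -> Kt; apply: K_edge Kt _ _; by rewrite !inE eqxx ?orbT.
apply: clique_build.
  have <- : #|` [fset x; y]%fset| = 2%N by rewrite cardfs2 xy.
  by apply: fsubset_leq_card; apply/fsubsetP => z; rewrite !inE => /orP[]/eqP->;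
    rewrite ?xs ?ys ?orbT.
move=> u w uZ wZ uw.
have [huw|] := pselect (u = aX \/ u = aY).
  rewrite (_ : [fset u; w]%fset = [fset w; u]%fset); first exact: hc wZ huw.
  by apply/fsetP=> z; rewrite !inE orbC.
move=> nu; have [hw|nw] := pselect (w = aX \/ w = aY); first exact: hc uZ hw.
apply: K_edge Kms _ _.
- move: uZ; rewrite !inE => /orP[/orP[->//|/orP[/eqP e|/eqP e]]|->]; rewrite ?orbT //;
  by exfalso; apply: nu; rewrite e; auto.
- move: wZ; rewrite !inE => /orP[/orP[->//|/orP[/eqP e|/eqP e]]|->]; rewrite ?orbT //;
  by exfalso; apply: nw; rewrite e; auto.
Qed.

Lemma central_part sigma : K sigma -> ~ Pset K X Y sigma ->
  central (St K sigma (X `&` Y)) [fset aX; aY]%fset.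
Proof.
move=> Ks nP; have ne : forall s, fsetU s [fset aX; aY]%fset != fset0.
  by move=> s; apply/eqP => /fsetP /(_ aX); rewrite !inE eqxx orbT.
have tA : fsub_in [fset aX; aY]%fset (X `&` Y).
  by move=> z; rewrite !inE => /orP[]/eqP->.
split.
  split; first by have := ne fset0; rewrite fset0U.
  split => //; have := central_key Ks nP (mu := fset0) _ _; rewrite !fset0U; apply => //.
move=> s [s0 [sA Kss]]; split; first exact: ne.
split; last exact: central_key.
by move=> z; rewrite inE => /orP[/sA|/tA].
Qed.
End Comb.
Section Basic.
Variables (R : realType) (V : choiceType).
Implicit Types (a b : V -> R) (S T : {fset V}).
Notation cs := (@closed_simplex V R).

Lemma cs_ge0 S a : cs S a -> forall v, 0 <= a v.
Proof. by case=> _ []. Qed.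

Lemma cs_out S a v : cs S a -> v \notin S -> a v = 0.
Proof. by case=> h _; apply: h. Qed.

Lemma cs_sum S a : cs S a -> \sum_(v <- S) a v = 1.
Proof. by case=> _ []. Qed.

Lemma sum_incl S T a (P : pred V) : (forall v, v \notin S -> a v = 0) -> fsubset S T ->
  \sum_(v <- S | P v) a v = \sum_(v <- T | P v) a v.
Proof.
move=> h ST; rewrite big_mkcond [RHS]big_mkcond /=.
apply: big_fset_incl => // x _ xS; by rewrite h // if_same.
Qed.

Lemma sum_any S T a (P : pred V) : (forall v, v \notin S -> a v = 0) ->
  (forall v, v \notin T -> a v = 0) ->
  \sum_(v <- S | P v) a v = \sum_(v <- T | P v) a v.
Proof.
move=> hS hT; rewrite (sum_incl P hS (fsubsetUl S T)).
by rewrite (sum_incl P hT (fsubsetUr S T)).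
Qed.

Lemma term_le_sum S (F : V -> R) (P : pred V) v : (forall i, 0 <= F i) -> v \in S -> P v ->
  F v <= \sum_(i <- S | P i) F i.
Proof.
move=> F0 vS Pv; rewrite big_mkcond /= (big_fsetD1 v) //= Pv lerDl.
by apply: sumr_ge0 => i _; case: ifP.
Qed.

Lemma sum_cond_le S (F : V -> R) (P : pred V) : (forall i, 0 <= F i) ->
  \sum_(i <- S | P i) F i <= \sum_(i <- S) F i.
Proof.
move=> F0; rewrite big_mkcond /=; apply: ler_sum => i _; case: ifP => // _.
Qed.

Lemma cs_le1 S a v : cs S a -> a v <= 1.
Proof.
move=> h; case: (boolP (v \in S)) => vS; last by rewrite (cs_out h vS) ler01.
have := term_le_sum (P := predT) (cs_ge0 h) vS isT.
by rewrite /= (cs_sum h).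
Qed.

Lemma cs_restrict S T a : cs S a -> (forall v, v \notin T -> a v = 0) -> cs T a.
Proof.
move=> h hT; split => //; split; first exact: cs_ge0 h.
rewrite -(cs_sum h); have := sum_any predT hT (fun v => cs_out h (v:=v)).
by rewrite !big_mkcond.
Qed.

Lemma cs_ne S a : cs S a -> S != fset0.
Proof. by move=> h; apply/eqP => S0; have := cs_sum h; rewrite S0 big_seq_fset0 => /eqP; rewrite eq_sym oner_eq0. Qed.

Definition supp a : {fset V} :=
  match pselect (exists S : {fset V}, forall v, v \notin S -> a v = 0) with
  | left h => [fset v in projT1 (cid h) | a v != 0]%fset
  | right _ => fset0
  end.

Lemma supp_out S a : (forall v, v \notin S -> a v = 0) -> forall v, v \notin supp a -> a v = 0.
Proof.
move=> hS v; rewrite /supp; case: pselect => [h|nh]; last by exfalso; apply: nh; exists S.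
case: (cid h) => S' HS' /=; rewrite !inE negb_and negbK => /orP[/HS'//|/eqP//].
Qed.

Definition sP (P : set V) a := \sum_(v <- supp a | `[< P v >]) a v.

Lemma sP_cs S a P : (forall v, v \notin S -> a v = 0) -> sP P a = \sum_(v <- S | `[< P v >]) a v.
Proof. by move=> h; apply: sum_any => //; apply: supp_out h. Qed.

End Basic.
Section Retr.
Variables (R : realType) (V : choiceType) (X Y : set V) (aX aY : V).
Hypotheses (HaX : (X `&` Y) aX) (HaY : (X `&` Y) aY).
Implicit Types (a b : V -> R) (S T : {fset V}).
Notation cs := (@closed_simplex V R).

Definition XA : set V := [set v | X v /\ ~ Y v].
Definition YA : set V := [set v | Y v /\ ~ X v].
Definition sX a := sP XA a.
Definition sY a := sP YA a.
Definition mm a := Num.min (sX a) (sY a).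
Definition gX a v := if `[< XA v >] then a v * (mm a / sX a) else 0.
Definition gY a v := if `[< YA v >] then a v * (mm a / sY a) else 0.
Definition cc a v := (if v == aX then mm a else 0) + (if v == aY then mm a else 0).
Definition rr a : V -> R := fun v => a v - gX a v - gY a v + cc a v.
Definition hh a (t : R) : V -> R := fun v => a v + t * (rr a v - a v).

Lemma sX_cs S a : cs S a -> sX a = \sum_(v <- S | `[< XA v >]) a v.
Proof. by move=> h; apply: sP_cs => v; apply: cs_out h. Qed.
Lemma sY_cs S a : cs S a -> sY a = \sum_(v <- S | `[< YA v >]) a v.
Proof. by move=> h; apply: sP_cs => v; apply: cs_out h. Qed.

Lemma sX_ge0 S a : cs S a -> 0 <= sX a.
Proof. by move=> h; rewrite (sX_cs h); apply: sumr_ge0 => i _; exact: (cs_ge0 h _). Qed.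
Lemma sY_ge0 S a : cs S a -> 0 <= sY a.
Proof. by move=> h; rewrite (sY_cs h); apply: sumr_ge0 => i _; exact: (cs_ge0 h _). Qed.

Lemma mm_ge0 S a : cs S a -> 0 <= mm a.
Proof. by move=> h; rewrite /mm le_min (sX_ge0 h) (sY_ge0 h). Qed.
Lemma mm_leX a : mm a <= sX a.
Proof. by rewrite /mm ge_min lexx. Qed.
Lemma mm_leY a : mm a <= sY a.
Proof. by rewrite /mm ge_min lexx orbT. Qed.
Lemma mm_cases a : mm a = sX a \/ mm a = sY a.
Proof.
by rewrite /mm; case: (leP (sX a) (sY a)) => h; [left | right].
Qed.

Lemma qX_01 S a : cs S a -> 0 <= mm a / sX a <= 1.
Proof.
move=> h; have m0 := mm_ge0 h; have s0 := sX_ge0 h.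
have [->|sn0] := eqVneq (sX a) 0; first by rewrite invr0 mulr0 lexx ler01.
have sp : 0 < sX a by rewrite lt_def sn0 s0.
by rewrite divr_ge0 //= ler_pdivrMr // mul1r mm_leX.
Qed.
Lemma qY_01 S a : cs S a -> 0 <= mm a / sY a <= 1.
Proof.
move=> h; have m0 := mm_ge0 h; have s0 := sY_ge0 h.
have [->|sn0] := eqVneq (sY a) 0; first by rewrite invr0 mulr0 lexx ler01.
have sp : 0 < sY a by rewrite lt_def sn0 s0.
by rewrite divr_ge0 //= ler_pdivrMr // mul1r mm_leY.
Qed.

Lemma mulqX S a : cs S a -> sX a * (mm a / sX a) = mm a.
Proof.
move=> h; have [e|sn0] := eqVneq (sX a) 0; last by rewrite mulrCA divff // mulr1.
have : mm a <= 0 by rewrite -e mm_leX.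
have := mm_ge0 h => h1 h2; have -> : mm a = 0 by apply/eqP; rewrite eq_le h1 h2.
by rewrite mul0r mulr0.
Qed.
Lemma mulqY S a : cs S a -> sY a * (mm a / sY a) = mm a.
Proof.
move=> h; have [e|sn0] := eqVneq (sY a) 0; last by rewrite mulrCA divff // mulr1.
have : mm a <= 0 by rewrite -e mm_leY.
have := mm_ge0 h => h1 h2; have -> : mm a = 0 by apply/eqP; rewrite eq_le h1 h2.
by rewrite mul0r mulr0.
Qed.

Lemma aX_nXA : ~ XA aX. Proof. by case: HaX => _ hy [_]. Qed.
Lemma aX_nYA : ~ YA aX. Proof. by case: HaX => hx _ [_]. Qed.
Lemma aY_nXA : ~ XA aY. Proof. by case: HaY => _ hy [_]. Qed.
Lemma aY_nYA : ~ YA aY. Proof. by case: HaY => hx _ [_]. Qed.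

Lemma mm0 a : mm a = 0 -> rr a = a.
Proof.
move=> m0; apply/funext => v; rewrite /rr /gX /gY /cc m0 !mul0r !mulr0 !if_same.
by rewrite !subr0 !addr0.
Qed.

Lemma hh0 a : hh a 0 = a.
Proof. by apply/funext => v; rewrite /hh mul0r addr0. Qed.
Lemma hh1 a : hh a 1 = rr a.
Proof. by apply/funext => v; rewrite /hh mul1r addrC subrK. Qed.

Lemma sum_indic T (c : R) x : x \in T -> \sum_(v <- T) (if v == x then c else 0) = c.
Proof.
move=> xT; rewrite (big_fsetD1 x) //= eqxx big1_seq ?addr0 // => i /andP[_].
by rewrite !inE => /andP[/negbTE -> _].
Qed.

Lemma rr_nonneg S a v : cs S a -> 0 <= rr a v.
Proof.
move=> h; have a0 := cs_ge0 h v; have m0 := mm_ge0 h.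
have c0 : 0 <= cc a v by rewrite /cc; apply: addr_ge0; case: ifP.
rewrite /rr /gX /gY; apply: addr_ge0 => //.
case: (pselect (XA v)) => xa.
  have ny : ~ YA v by case: xa => _ ny [].
  rewrite (asboolT xa) (asboolF ny) subr0 -{1}(mulr1 (a v)) -mulrBr.
  by apply: mulr_ge0 => //; case/andP: (qX_01 h) => _; rewrite subr_ge0.
rewrite (asboolF xa) subr0; case: (pselect (YA v)) => ya; last by rewrite asboolF // subr0.
rewrite (asboolT ya) -{1}(mulr1 (a v)) -mulrBr.
by apply: mulr_ge0 => //; case/andP: (qY_01 h) => _; rewrite subr_ge0.
Qed.

Lemma rr_cs_gen T a : cs T a -> (mm a != 0 -> aX \in T /\ aY \in T) -> cs T (rr a).
Proof.
move=> h hT; have [m0|mn0] := eqVneq (mm a) 0; first by rewrite mm0.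
case: (hT mn0) => xT yT; split; last split.
- move=> v vT; rewrite /rr /gX /gY /cc (cs_out h vT) !mul0r !if_same.
  have -> : (v == aX) = false by apply/negbTE; apply: contraNneq vT => ->.
  have -> : (v == aY) = false by apply/negbTE; apply: contraNneq vT => ->.
  by rewrite !subr0 !addr0.
- by move=> v; apply: rr_nonneg h.
- rewrite /rr big_split /= !sumrB /= /cc big_split /= !sum_indic // (cs_sum h).
  rewrite /gX /gY -!big_mkcond /= -!mulr_suml -(sX_cs h) -(sY_cs h).
  by rewrite (mulqX h) (mulqY h); lra.
Qed.

Lemma cs_conv T a b t : cs T a -> cs T b -> 0 <= t <= 1 ->
  cs T (fun v => a v + t * (b v - a v)).
Proof.
move=> ha hb /andP[t0 t1]; split; last split.
- by move=> v vT; rewrite (cs_out ha vT) (cs_out hb vT) subrr mulr0 addr0.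
- move=> v; have := cs_ge0 ha v; have := cs_ge0 hb v => h1 h2.
  have -> : a v + t * (b v - a v) = (1 - t) * a v + t * b v by ring.
  by apply: addr_ge0; apply: mulr_ge0 => //; rewrite subr_ge0.
- by rewrite big_split /= -mulr_sumr sumrB (cs_sum ha) (cs_sum hb) subrr mulr0 addr0.
Qed.

End Retr.
Section KPart.
Variables (R : realType) (V : choiceType) (K : set {fset V}) (X Y : set V) (aX aY : V).
Hypotheses (HK : is_complex K) (HKc : is_clique K) (HXY : X `|` Y = vertices K)
  (HaX : (X `&` Y) aX) (HaY : (X `&` Y) aY)
  (H1 : forall tau, edge K tau -> card_in tau (X `&` Y) = 1%N ->
     card_in tau (X `\` (X `&` Y)) = 1%N -> K (fsetU tau [fset aX]%fset))
  (H2 : forall tau, edge K tau -> card_in tau (X `&` Y) = 1%N ->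
     card_in tau (Y `\` (X `&` Y)) = 1%N -> K (fsetU tau [fset aY]%fset))
  (H3 : forall tau, edge K tau -> ~ Pset K X Y tau -> K (fsetU tau [fset aX; aY]%fset)).
Implicit Types (a b : V -> R) (S T : {fset V}).
Notation cs := (@closed_simplex V R).
Notation L := (full_sub K X `|` full_sub K Y).
Notation XA := (XA X Y).
Notation YA := (YA X Y).
Notation sX := (@sX R V X Y).
Notation sY := (@sY R V X Y).
Notation mm := (@mm R V X Y).
Notation rr := (@rr R V X Y aX aY).
Notation hh := (@hh R V X Y aX aY).

Definition twosided S := (exists2 v, v \in S & XA v) /\ (exists2 v, v \in S & YA v).
Definition TS S := if `[< twosided S >] then (S `|` [fset aX; aY])%fset else S.

Lemma S_TS S : fsubset S (TS S).
Proof. by rewrite /TS; case: ifP => _; [apply: fsubsetUl | apply: fsubset_refl]. Qed.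

Lemma vXY S v : K S -> v \in S -> X v \/ Y v.
Proof. by move=> KS vS; exact: (K_vert HK HXY KS vS). Qed.

Lemma TS_K S : K S -> K (TS S).
Proof.
move=> KS; rewrite /TS; case: (pselect (twosided S)) => [two|]; last by move/asboolPn/negbTE ->.
rewrite asboolT //; case: two => [[x xS [Xx nYx]] [y yS [Yy nXy]]].
pose sig := [fset v in S | `[< ~ (setI X Y) v >]]%fset.
pose mu := [fset v in S | `[< (setI X Y) v >]]%fset.
have xs : x \in sig by rewrite !inE xS /=; apply/asboolP => -[].
have ys : y \in sig by rewrite !inE yS /=; apply/asboolP => -[].
have Ks : K sig.
  apply: (K_sub HK KS); first by apply/fsubsetP => z; rewrite !inE => /andP[].
  by apply/eqP => e; move: xs; rewrite e inE.
have nP : ~ Pset K X Y sig.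
  case=> _ [hX | [hY | [c [cs' Ac]]]].
  - by apply: nXy; apply: hX.
  - by apply: nYx; apply: hY.
  - by move: cs'; rewrite !inE => /andP[_ /asboolP].
have muA : fsub_in mu (X `&` Y) by move=> z; rewrite !inE => /andP[_ /asboolP].
have e1 : (mu `|` sig)%fset = S.
  apply/fsetP => z; rewrite !inE; case: (z \in S) => //=.
  by case: (pselect (X z /\ Y z)) => h; rewrite (asboolT h) ?orbT.
have := central_key HK HKc HXY H1 H2 H3 Ks nP muA; rewrite e1 => /(_ KS).
have -> : ((mu `|` [fset aX; aY]) `|` sig)%fset = (S `|` [fset aX; aY])%fset => //.
apply/fsetP => z; rewrite !inE; case: (z \in S) => /=; last by rewrite orbF.
by case: (pselect (X z /\ Y z)) => h; rewrite (asboolT h) ?orbT.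
Qed.


Lemma sum0_ex S a (P : set V) : \sum_(v <- S | `[< P v >]) a v != 0 -> exists2 v, v \in S & P v.
Proof.
move=> h; apply: contrapT => nex; move/eqP: h; apply; apply: big1_seq => i /andP[/asboolP Pi iS].
by exfalso; apply: nex; exists i.
Qed.

Lemma mm_two S a : cs S a -> mm a != 0 -> twosided S.
Proof.
move=> h mn0; have m0 := mm_ge0 X Y h.
have hX : sX a != 0.
  apply: contraNneq mn0 => e; have := mm_leX X Y a; rewrite e => h2.
  by rewrite eq_le h2 m0.
have hY : sY a != 0.
  apply: contraNneq mn0 => e; have := mm_leY X Y a; rewrite e => h2.
  by rewrite eq_le h2 m0.
split; [apply: (sum0_ex (P := XA) (a := a)) | apply: (sum0_ex (P := YA) (a := a))].
  by rewrite -(sX_cs X Y h).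
by rewrite -(sY_cs X Y h).
Qed.

Lemma rr_cs S a : cs S a -> cs (TS S) (rr a).
Proof.
move=> h; have h' : cs (TS S) a.
  apply: (cs_restrict h) => v vT; apply: (cs_out h); apply: contraNN vT.
  by move/(fsubsetP (S_TS S)).
apply: (rr_cs_gen h') => /(mm_two h) two; rewrite /TS asboolT //.
by rewrite !inE !eqxx ?orbT.
Qed.

Lemma hh_cs S a t : cs S a -> 0 <= t <= 1 -> cs (TS S) (hh a t).
Proof.
move=> h t01; have h' : cs (TS S) a.
  apply: (cs_restrict h) => v vT; apply: (cs_out h); apply: contraNN vT.
  by move/(fsubsetP (S_TS S)).
exact: cs_conv h' (rr_cs h) t01.
Qed.

Lemma side0 S a (P : set V) : cs S a -> \sum_(v <- S | `[< P v >]) a v = 0 ->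
  forall v, P v -> a v = 0.
Proof.
move=> h s0 v Pv; case: (boolP (v \in S)) => vS; last exact: cs_out h vS.
apply/eqP; rewrite eq_le (cs_ge0 h v) andbT -s0.
by apply: (term_le_sum (P := fun v => `[< P v >]) (cs_ge0 h) vS); apply/asboolP.
Qed.

Lemma rr_side S a : cs S a -> (forall v, YA v -> rr a v = 0) \/ (forall v, XA v -> rr a v = 0).
Proof.
move=> h; have [m0|mn0] := eqVneq (mm a) 0.
  rewrite mm0 //; case: (mm_cases X Y a) => e.
    by right; apply: (side0 h); rewrite -(sX_cs X Y h) -e.
  by left; apply: (side0 h); rewrite -(sY_cs X Y h) -e.
case: (mm_cases X Y a) => e.
- right => v xv; have ny : ~ YA v by case: xv => _ ? [].
  have sn0 : sX a != 0 by rewrite -e.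
  rewrite /rr /gX /gY /cc (asboolT xv) (asboolF ny) e divff // mulr1.
  have -> : (v == aX) = false by apply/negP => /eqP ex; apply: (aX_nXA HaX); rewrite -ex.
  have -> : (v == aY) = false by apply/negP => /eqP ex; apply: (aY_nXA HaY); rewrite -ex.
  by rewrite subrr subr0 addr0 addr0.
- left => v yv; have nx : ~ XA v by case: yv => _ ? [].
  have sn0 : sY a != 0 by rewrite -e.
  rewrite /rr /gX /gY /cc (asboolT yv) (asboolF nx) e divff // mulr1.
  have -> : (v == aX) = false by apply/negP => /eqP ex; apply: (aX_nYA HaX); rewrite -ex.
  have -> : (v == aY) = false by apply/negP => /eqP ex; apply: (aY_nYA HaY); rewrite -ex.
  by rewrite subr0 subrr addr0 addr0.
Qed.

Lemma restrX T g : K T -> cs T g -> (forall v, YA v -> g v = 0) ->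
  cs [fset v in T | `[< X v >]]%fset g.
Proof.
move=> KT h hY; apply: (cs_restrict h) => v; rewrite !inE negb_and.
case/orP => [vT|vT]; first exact: (cs_out h vT).
case: (boolP (v \in T)) => vT'; last exact: cs_out h vT'.
apply: hY; split; last by move=> Xv; move/asboolP: vT; apply.
by case: (vXY KT vT') => // Xv; move/asboolP: vT.
Qed.

Lemma restrY T g : K T -> cs T g -> (forall v, XA v -> g v = 0) ->
  cs [fset v in T | `[< Y v >]]%fset g.
Proof.
move=> KT h hX; apply: (cs_restrict h) => v; rewrite !inE negb_and.
case/orP => [vT|vT]; first exact: (cs_out h vT).
case: (boolP (v \in T)) => vT'; last exact: cs_out h vT'.
apply: hX; split; last by move=> Yv; move/asboolP: vT; apply.
by case: (vXY KT vT') => // Yv; move/asboolP: vT.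
Qed.

Lemma KrestrX T : K T -> [fset v in T | `[< X v >]]%fset != fset0 -> L [fset v in T | `[< X v >]]%fset.
Proof.
move=> KT ne; left; split.
  by apply: (K_sub HK KT) => //; apply/fsubsetP => z; rewrite !inE => /andP[].
by move=> z; rewrite !inE => /andP[_ /asboolP].
Qed.

Lemma KrestrY T : K T -> [fset v in T | `[< Y v >]]%fset != fset0 -> L [fset v in T | `[< Y v >]]%fset.
Proof.
move=> KT ne; right; split.
  by apply: (K_sub HK KT) => //; apply/fsubsetP => z; rewrite !inE => /andP[].
by move=> z; rewrite !inE => /andP[_ /asboolP].
Qed.

Lemma rr_inL a : realization K a -> realization L (rr a).
Proof.
case=> S [KS h]; have KT := TS_K KS; have h' := rr_cs h.
case: (rr_side h) => hs.
  have hX := restrX KT h' hs; exists [fset v in TS S | `[< X v >]]%fset; split => //.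
  exact: KrestrX KT (cs_ne hX).
have hY := restrY KT h' hs; exists [fset v in TS S | `[< Y v >]]%fset; split => //.
exact: KrestrY KT (cs_ne hY).
Qed.

Lemma rr_L a : realization L a -> rr a = a.
Proof.
case=> S [[[KS sX']|[KS sY']] h]; apply: mm0.
  have : sY a = 0.
    rewrite (sY_cs X Y h); apply: big1_seq => i /andP[/asboolP [_ nX] iS].
    by exfalso; apply: nX; apply: sX'.
  by move=> e; apply/eqP; rewrite eq_le (mm_ge0 X Y h) andbT -e mm_leY.
have : sX a = 0.
  rewrite (sX_cs X Y h); apply: big1_seq => i /andP[/asboolP [_ nY] iS].
  by exfalso; apply: nY; apply: sY'.
by move=> e; apply/eqP; rewrite eq_le (mm_ge0 X Y h) andbT -e mm_leX.
Qed.

End KPart.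
Section Lip.
Variables (R : realType) (V : choiceType) (X Y : set V) (aX aY : V).
Hypotheses (HaX : (X `&` Y) aX) (HaY : (X `&` Y) aY).
Implicit Types (a b : V -> R) (S T : {fset V}).
Notation cs := (@closed_simplex V R).
Notation XA := (XA X Y).
Notation YA := (YA X Y).
Notation sX := (@sX R V X Y).
Notation sY := (@sY R V X Y).
Notation mm := (@mm R V X Y).
Notation gX := (@gX R V X Y).
Notation gY := (@gY R V X Y).
Notation cc := (@cc R V X Y aX aY).
Notation rr := (@rr R V X Y aX aY).
Notation hh := (@hh R V X Y aX aY).

Definition Dist S a b := \sum_(w <- S) `|b w - a w|.

Lemma Dist_ge0 S a b : 0 <= Dist S a b.
Proof. by apply: sumr_ge0 => i _. Qed.

Lemma diff_le S a b v : cs S a -> cs S b -> `|b v - a v| <= Dist S a b.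
Proof.
move=> ha hb; case: (boolP (v \in S)) => vS.
  by have := term_le_sum (F := fun w => `|b w - a w|) (P := predT) (fun i => normr_ge0 _) vS isT.
by rewrite (cs_out ha vS) (cs_out hb vS) subrr normr0 Dist_ge0.
Qed.

Lemma sum_diff S a b (P : pred V) :
  `|\sum_(w <- S | P w) b w - \sum_(w <- S | P w) a w| <= Dist S a b.
Proof.
rewrite -sumrB; apply: le_trans (ler_norm_sum _ _ _) _.
by apply: sum_cond_le => i.
Qed.

Lemma min_lip (x y z w d : R) : `|x - z| <= d -> `|y - w| <= d ->
  `|Num.min x y - Num.min z w| <= d.
Proof.
rewrite !ler_norml => /andP[h1 h2] /andP[h3 h4].
by case: (leP x y) => h5; case: (leP z w) => h6; apply/andP; split; lra.
Qed.

Lemma mm_diff S a b : cs S a -> cs S b -> `|mm b - mm a| <= Dist S a b.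
Proof.
move=> ha hb; apply: min_lip.
  by rewrite (sX_cs X Y ha) (sX_cs X Y hb); apply: sum_diff.
by rewrite (sY_cs X Y ha) (sY_cs X Y hb); apply: sum_diff.
Qed.

Lemma norm_mul_le1 (c x : R) : 0 <= c <= 1 -> `|c * x| <= `|x|.
Proof.
case/andP => c0 c1; rewrite normrM (ger0_norm c0).
by apply: ler_piMl.
Qed.

Lemma key_id (bv p s s' m m' q : R) : s != 0 -> s' * q = m' ->
  bv * q - p * (m / s) = q * (bv - p) + (p / s) * ((s - s') * q + (m' - m)).
Proof. by move=> sn0 e'; rewrite -e'; field. Qed.

Lemma gX_diff S a b v : cs S a -> cs S b -> `|gX b v - gX a v| <= 3 * Dist S a b.
Proof.
move=> ha hb; have D0 := Dist_ge0 S a b; rewrite /gX.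
case: (pselect (XA v)) => xv; last by rewrite asboolF // subrr normr0 mulr_ge0.
rewrite !asboolT //.
set p := a v; set s := sX a; set s' := sX b; set m := mm a; set m' := mm b.
have qb := qX_01 X Y hb; have e' := mulqX X Y hb; rewrite -/s' -/m' in qb e'.
have e := mulqX X Y ha; rewrite -/s -/m in e.
have p0 : 0 <= p := cs_ge0 ha v.
have ps : p <= s.
  rewrite /s (sX_cs X Y ha); case: (boolP (v \in S)) => vS.
    by apply: (term_le_sum (P := fun v => `[< XA v >]) (cs_ge0 ha)) => //; apply/asboolP.
  by rewrite /p (cs_out ha vS); apply: sumr_ge0 => i _; exact: (cs_ge0 ha _).
have dbv := diff_le v ha hb.
have dm := mm_diff ha hb; rewrite -/m -/m' in dm.
have ds : `|s' - s| <= Dist S a b.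
  by rewrite /s /s' (sX_cs X Y ha) (sX_cs X Y hb); apply: sum_diff.
have [s0|sn0] := eqVneq s 0.
  have p00 : p = 0 by apply/eqP; rewrite eq_le p0 andbT -s0.
  rewrite -/p p00 subr0 in dbv; rewrite p00 mul0r subr0 mulrC.
  have := norm_mul_le1 (b v) qb; lra.
have sp : 0 < s by rewrite lt_def sn0 /s (sX_ge0 X Y ha).
have key : b v * (m' / s') - p * (m / s) =
    (m' / s') * (b v - p) + (p / s) * ((s - s') * (m' / s') + (m' - m)).
  exact: key_id.
rewrite key; apply: le_trans (ler_normD _ _) _.
have h1 : `|m' / s' * (b v - p)| <= Dist S a b by apply: le_trans (norm_mul_le1 _ qb) dbv.
have pq : 0 <= p / s <= 1 by rewrite divr_ge0 ?(ltW sp) //= ler_pdivrMr // mul1r.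
have h2 : `|(s - s') * (m' / s')| <= Dist S a b.
  by rewrite mulrC; apply: le_trans (norm_mul_le1 _ qb) _; rewrite distrC.
have h3 : `|p / s * ((s - s') * (m' / s') + (m' - m))| <= 2 * Dist S a b.
  apply: le_trans (norm_mul_le1 _ pq) _; apply: le_trans (ler_normD _ _) _; lra.
lra.
Qed.

Lemma gY_diff S a b v : cs S a -> cs S b -> `|gY b v - gY a v| <= 3 * Dist S a b.
Proof.
move=> ha hb; have D0 := Dist_ge0 S a b; rewrite /gY.
case: (pselect (YA v)) => xv; last by rewrite asboolF // subrr normr0 mulr_ge0.
rewrite !asboolT //.
set p := a v; set s := sY a; set s' := sY b; set m := mm a; set m' := mm b.
have qb := qY_01 X Y hb; have e' := mulqY X Y hb; rewrite -/s' -/m' in qb e'.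
have e := mulqY X Y ha; rewrite -/s -/m in e.
have p0 : 0 <= p := cs_ge0 ha v.
have ps : p <= s.
  rewrite /s (sY_cs X Y ha); case: (boolP (v \in S)) => vS.
    by apply: (term_le_sum (P := fun v => `[< YA v >]) (cs_ge0 ha)) => //; apply/asboolP.
  by rewrite /p (cs_out ha vS); apply: sumr_ge0 => i _; exact: (cs_ge0 ha _).
have dbv := diff_le v ha hb.
have dm := mm_diff ha hb; rewrite -/m -/m' in dm.
have ds : `|s' - s| <= Dist S a b.
  by rewrite /s /s' (sY_cs X Y ha) (sY_cs X Y hb); apply: sum_diff.
have [s0|sn0] := eqVneq s 0.
  have p00 : p = 0 by apply/eqP; rewrite eq_le p0 andbT -s0.
  rewrite -/p p00 subr0 in dbv; rewrite p00 mul0r subr0 mulrC.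
  have := norm_mul_le1 (b v) qb; lra.
have sp : 0 < s by rewrite lt_def sn0 /s (sY_ge0 X Y ha).
have key : b v * (m' / s') - p * (m / s) =
    (m' / s') * (b v - p) + (p / s) * ((s - s') * (m' / s') + (m' - m)).
  exact: key_id.
rewrite key; apply: le_trans (ler_normD _ _) _.
have h1 : `|m' / s' * (b v - p)| <= Dist S a b by apply: le_trans (norm_mul_le1 _ qb) dbv.
have pq : 0 <= p / s <= 1 by rewrite divr_ge0 ?(ltW sp) //= ler_pdivrMr // mul1r.
have h2 : `|(s - s') * (m' / s')| <= Dist S a b.
  by rewrite mulrC; apply: le_trans (norm_mul_le1 _ qb) _; rewrite distrC.
have h3 : `|p / s * ((s - s') * (m' / s') + (m' - m))| <= 2 * Dist S a b.
  apply: le_trans (norm_mul_le1 _ pq) _; apply: le_trans (ler_normD _ _) _; lra.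
lra.
Qed.


Lemma cc_diff S a b v : cs S a -> cs S b -> `|cc b v - cc a v| <= 2 * Dist S a b.
Proof.
move=> ha hb; have dm := mm_diff ha hb; have D0 := Dist_ge0 S a b; rewrite /cc.
case: (v == aX); case: (v == aY); rewrite ?addr0 ?subr0 ?add0r ?subrr ?normr0;
  try lra.
- have -> : mm b + mm b - (mm a + mm a) = (mm b - mm a) + (mm b - mm a) by ring.
  by apply: le_trans (ler_normD _ _) _; lra.
Qed.

Lemma norm4 (x1 x2 x3 x4 : R) : `|x1 - x2 - x3 + x4| <= `|x1| + `|x2| + `|x3| + `|x4|.
Proof.
apply: le_trans (ler_normD _ _) _; rewrite lerD2r.
apply: le_trans (ler_normB _ _) _; rewrite lerD2r.
exact: ler_normB.
Qed.

Lemma rr_diff S a b v : cs S a -> cs S b -> `|rr b v - rr a v| <= 9 * Dist S a b.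
Proof.
move=> ha hb.
have -> : rr b v - rr a v = (b v - a v) - (gX b v - gX a v) - (gY b v - gY a v) + (cc b v - cc a v).
  by rewrite /rr; ring.
apply: le_trans (norm4 _ _ _ _) _.
have := diff_le v ha hb; have := gX_diff v ha hb; have := gY_diff v ha hb; have := cc_diff v ha hb.
lra.
Qed.

Lemma hh_diff S a b t v : cs S a -> cs S b -> 0 <= t <= 1 ->
  `|hh b t v - hh a t v| <= 10 * Dist S a b.
Proof.
move=> ha hb /andP[t0 t1].
have -> : hh b t v - hh a t v = (1 - t) * (b v - a v) + t * (rr b v - rr a v) by rewrite /hh; ring.
apply: le_trans (ler_normD _ _) _.
have t01 : 0 <= 1 - t <= 1 by apply/andP; split; lra.
have t01' : 0 <= t <= 1 by apply/andP; split.
have := norm_mul_le1 (b v - a v) t01; have := norm_mul_le1 (rr b v - rr a v) t01'.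
have := diff_le v ha hb; have := rr_diff v ha hb; have := Dist_ge0 S a b; lra.
Qed.

Lemma D_bound S a b e : (forall w, w \in S -> `|b w - a w| < e) ->
  Dist S a b <= (\sum_(w <- S) 1) * e.
Proof.
move=> h; rewrite mulr_suml /Dist big_seq [X in _ <= X]big_seq; apply: ler_sum => i iS.
by rewrite mul1r ltW // h.
Qed.

End Lip.
Section Topo.
Variables (R : realType) (V : choiceType) (K : set {fset V}) (X Y : set V) (aX aY : V).
Hypotheses (HK : is_complex K) (HKc : is_clique K) (HXY : X `|` Y = vertices K)
  (HaX : (X `&` Y) aX) (HaY : (X `&` Y) aY)
  (H1 : forall tau, edge K tau -> card_in tau (X `&` Y) = 1%N ->
     card_in tau (X `\` (X `&` Y)) = 1%N -> K (fsetU tau [fset aX]%fset))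
  (H2 : forall tau, edge K tau -> card_in tau (X `&` Y) = 1%N ->
     card_in tau (Y `\` (X `&` Y)) = 1%N -> K (fsetU tau [fset aY]%fset))
  (H3 : forall tau, edge K tau -> ~ Pset K X Y tau -> K (fsetU tau [fset aX; aY]%fset)).
Implicit Types (a b : V -> R) (S T : {fset V}).
Notation cs := (@closed_simplex V R).
Notation L := (full_sub K X `|` full_sub K Y).
Notation rr := (@rr R V X Y aX aY).
Notation hh := (@hh R V X Y aX aY).
Notation TS := (TS X Y aX aY).

Lemma ball_lemma (M : set {fset V}) U T p : weak_open M U -> (T = fset0 \/ M T) -> U p ->
  exists2 e : R, 0 < e & forall g, cs T g -> (forall v, `|g v - p v| < e) -> U g.
Proof.
move=> [UM Uo] hT Up.
case: (pselect (forall v, v \notin T -> p v = 0)) => hz.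
  have [S0 [MS0 hS0]] := UM p Up.
  have pT := cs_restrict hS0 hz.
  case: hT => [T0|MT]; first by exfalso; move: (cs_ne pT); rewrite T0 eqxx.
  have [e e0 He] := Uo T MT p pT Up.
  by exists e => // g gT hg; apply: He gT _ => v _; exact: hg.
have [v [vT pv]] : exists v, v \notin T /\ p v <> 0.
  apply: contrapT => hn; apply: hz => v vT; apply: contrapT => pv; apply: hn; by exists v.
exists `|p v|; first by rewrite normr_gt0; apply/eqP.
by move=> g gT /(_ v); rewrite (cs_out gT vT) sub0r normrN ltxx.
Qed.

Lemma TS_K' S : K S -> K (TS S).
Proof. exact: (TS_K HK HKc HXY H1 H2 H3). Qed.

Lemma eps_lt (N e : R) (k : R) : 0 <= N -> 0 < e -> 0 < k -> k * (N * (e / (k * (N + 1)))) < e.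
Proof.
move=> N0 e0 k0; have N1 : 0 < N + 1 by lra.
have -> : k * (N * (e / (k * (N + 1)))) = e * (N / (N + 1)).
  by field; apply/andP; split; rewrite gt_eqF.
rewrite -[X in _ < X]mulr1 ltr_pM2l // ltr_pdivrMr // mul1r; lra.
Qed.

Lemma rr_open U : weak_open L U -> weak_open K [set a | realization K a /\ U (rr a)].
Proof.
move=> Uo; split; first by move=> a [].
move=> S KS a ha [_ Ua].
have KT : K (TS S) := TS_K' KS.
have hTX : [fset v in TS S | `[< X v >]]%fset = fset0 \/ L [fset v in TS S | `[< X v >]]%fset.
  case: (eqVneq [fset v in TS S | `[< X v >]]%fset fset0) => [->|ne]; [by left|right].
  exact: (KrestrX Y HK KT ne).
have hTY : [fset v in TS S | `[< Y v >]]%fset = fset0 \/ L [fset v in TS S | `[< Y v >]]%fset.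
  case: (eqVneq [fset v in TS S | `[< Y v >]]%fset fset0) => [->|ne]; [by left|right].
  exact: (KrestrY X HK KT ne).
have [eX eX0 HX] := ball_lemma Uo hTX Ua.
have [eY eY0 HY] := ball_lemma Uo hTY Ua.
set N := \sum_(w <- S) (1 : R).
have N0 : 0 <= N by apply: sumr_ge0.
set e := Num.min eX eY.
have e0 : 0 < e by rewrite /e lt_min eX0 eY0.
have k0 : (0 : R) < 9 by [].
exists (e / (9 * (N + 1))); first by apply: divr_gt0 => //; apply: mulr_gt0 => //; lra.
move=> b hb close; split; first by exists S.
have Dle := D_bound close.
have hr : forall v, `|rr b v - rr a v| < e.
  move=> v; apply: le_lt_trans (rr_diff X Y aX aY v ha hb) _.
  apply: le_lt_trans (eps_lt N0 e0 k0); rewrite ler_pM2l //.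
have hb' := rr_cs X Y aX aY hb.
case: (rr_side HaX HaY hb) => hs.
  apply: HX; first exact: (restrX HK HXY KT hb' hs).
  by move=> v; apply: lt_le_trans (hr v) _; rewrite /e ge_min lexx.
apply: HY; first exact: (restrY HK HXY KT hb' hs).
by move=> v; apply: lt_le_trans (hr v) _; rewrite /e ge_min lexx orbT.
Qed.

Lemma rr_cont (T0 : topologicalType) (D : set T0) f :
  cont_into K D f -> cont_into L D (fun t => rr (f t)).
Proof.
case=> hr hU; split.
  by move=> t Dt; apply: (rr_inL HK HKc HXY HaX HaY H1 H2 H3); apply: hr.
move=> U Uo; have [Q1 [Q2 Q3]] := hU _ (rr_open Uo); exists Q1; split => //.
rewrite Q3; apply/seteqP; split => t [h Dt]; split => //.
- by case: h.
- by split => //; exact: hr.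
Qed.

Lemma hh_tdiff S a t t' v : cs S a -> `|hh a t v - hh a t' v| <= `|t - t'|.
Proof.
move=> ha; have hr := rr_cs X Y aX aY ha.
have -> : hh a t v - hh a t' v = (t - t') * (rr a v - a v) by rewrite /hh; ring.
rewrite normrM; apply: ler_piMr => //.
have := cs_ge0 ha v; have := cs_le1 v ha; have := cs_ge0 hr v; have := cs_le1 v hr.
by move=> *; rewrite ler_norml; apply/andP; split; lra.
Qed.

Definition Wset U t0 d := [set a | realization K a /\
  forall t, 0 <= t <= 1 -> `|t - t0| <= d -> U (hh a t)].

Lemma W_mem U a t0 : weak_open K U -> realization K a -> U (hh a t0) ->
  exists2 d, 0 < d & Wset U t0 d a.
Proof.
move=> Uo [S [KS ha]] Ut0.
have [e e0 He] := ball_lemma Uo (or_intror (TS_K' KS)) Ut0.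
exists (e / 2); first by lra.
split; first by exists S.
move=> t t01 tt0; apply: He; first exact: (@hh_cs R V X Y aX aY S a t ha t01).
by move=> v; apply: le_lt_trans (hh_tdiff t t0 v ha) _; lra.
Qed.

Lemma W_open U t0 d : weak_open K U -> weak_open K (Wset U t0 d).
Proof.
move=> Uo; split; first by move=> a [].
move=> S KS a ha [_ Wa].
have KT := TS_K' KS.
set l := Num.max 0 (t0 - d); set u := Num.min 1 (t0 + d).
have Jeq : forall t, `[l, u]%classic t <-> (0 <= t <= 1 /\ `|t - t0| <= d).
  move=> t; rewrite /= in_itv /= /l /u ge_max le_min ler_norml; split.
    by case/andP => /andP[h1 h2] /andP[h3 h4]; split; apply/andP; split; lra.
  by case=> /andP[h1 h2] /andP[h3 h4]; apply/andP; split; apply/andP; split; lra.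
set N := \sum_(w <- S) (1 : R).
have N0 : 0 <= N by apply: sumr_ge0.
have [w0 w0S] : exists w, w \in S.
  have := cs_ne ha; case/fset0Pn => w ?; by exists w.
pose P := fun (eps : R) (t : R) => forall b, cs S b ->
  (forall w, w \in S -> `|b w - a w| < eps) -> 0 <= t <= 1 -> U (hh b t).
have NC : \forall eps \near nbhs (0 : R), `[l, u]%classic `<=` P eps.
  apply: ((compact_near_coveringP _).1 (@segment_compact R l u) R (nbhs (0 : R)) P (nbhs_filter _)).
  move=> t /Jeq [t01 tt0].
  have Ut := Wa t t01 tt0.
  have [e e0 He] := ball_lemma Uo (or_intror KT) Ut.
  have k0 : (0 : R) < 20 by [].
  exists ([set t' | `|t - t'| < e / 2], [set eps | `|0 - eps| < e / (20 * (N + 1))]).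
    have eh : 0 < e / 2 by lra.
    have eh2 : 0 < e / (20 * (N + 1)) by apply: divr_gt0 => //; apply: mulr_gt0 => //; lra.
    split => /=.
      by apply: (filterS _ (nbhsx_ballx t _ eh)) => y; rewrite /ball /=.
    by apply: (filterS _ (nbhsx_ballx (0:R) _ eh2)) => y; rewrite /ball /=.
  case=> t' eps /= [h1 h2] b hb close t'01.
  apply: He; first exact: (@hh_cs R V X Y aX aY S b t' hb t'01).
  move=> v.
  have Dle := D_bound close.
  have hd := hh_diff X Y aX aY v ha hb t'01.
  have ht := hh_tdiff t' t v ha.
  have epsle : eps <= e / (20 * (N + 1)).
    by move: h2; rewrite sub0r normrN => h2; apply: le_trans (ler_norm _) (ltW h2).
  have : 10 * Dist S a b < e / 2.
    apply: le_lt_trans (_ : 10 * (N * (e / (20 * (N + 1)))) < e / 2).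
      by rewrite ler_pM2l //; apply: le_trans Dle _; rewrite -/N; apply: ler_wpM2l.
    have := eps_lt N0 (_ : 0 < e / 2) (_ : (0:R) < 10) => /=.
    have -> : e / 2 / (10 * (N + 1)) = e / (20 * (N + 1)).
      by field; rewrite gt_eqF //; lra.
    by apply; lra.
  have : `|hh b t' v - hh a t v| <= `|hh b t' v - hh a t' v| + `|hh a t' v - hh a t v|.
    by have := ler_normD (hh b t' v - hh a t' v) (hh a t' v - hh a t v); rewrite addrA subrK.
  rewrite distrC in h1.
  lra.
case/nbhs_ballP: NC => r r0 Hr.
have r0' : (0 : R) < r by exact: r0.
have r2 : `|(0 : R) - r / 2| < r by rewrite sub0r normrN gtr0_norm ?divr_gt0 //; lra.
exists (r / 2); first by apply: divr_gt0.
move=> b hb close; split; first by exists S.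
move=> t t01 tt0; apply: (Hr (r / 2) _ t) => //.
by apply/Jeq.
Qed.

Lemma hh_cont n (f : 'rV[R]_n -> V -> R) : cont_into K (@cube R n) f ->
  cont_into K (@cubeI R n) (fun p => hh (f p.1) p.2).
Proof.
case=> hr hU; split.
  move=> p [cx t01]; have [S [KS hS]] := hr _ cx; exists (TS S); split.
    exact: TS_K' KS.
  exact: (@hh_cs R V X Y aX aY S (f p.1) p.2 hS t01).
move=> U Uo.
pose Q := [set p : 'rV[R]_n * R | exists t0 d (Z1 : set 'rV[R]_n),
  [/\ 0 < d, open Z1, Z1 `&` @cube R n = f @^-1` Wset U t0 d `&` @cube R n, Z1 p.1 &
      `|p.2 - t0| < d]].
exists Q; split.
  rewrite openE => p [t0 [d [Z1 [d0 zZ1 eZ1 Z1p tp]]]].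
  suff : filter_prod (nbhs p.1) (nbhs p.2) Q by [].
  exists (Z1, [set s : R | `|s - t0| < d]); first split => /=.
    by apply: open_nbhs_nbhs; split.
  have rp : 0 < d - `|p.2 - t0| by lra.
  apply: (filterS _ (nbhsx_ballx p.2 _ rp)) => y; rewrite /ball /= => hy.
  have := ler_normD (y - p.2) (p.2 - t0); rewrite addrA subrK => h.
  rewrite distrC in hy; lra.
  case=> x s [/= Z1x hs]; exists t0, d, Z1; split => //.
apply/seteqP; split => [p [Qp Dp] | p [Up Dp]].
  case: Qp => t0 [d [Z1 [d0 _ eZ1 Z1p tp]]].
  have : (f @^-1` Wset U t0 d `&` @cube R n) p.1 by rewrite -eZ1; split => //; case: Dp.
  case=> [[_ HW] _]; split => //; apply: HW; [by case: Dp | exact: ltW].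
have [d d0 Wd] := W_mem Uo (hr _ Dp.1) Up.
have [Z1 [zZ1 eZ1]] := hU _ (W_open p.2 d Uo).
split => //; exists p.2, d, Z1; split => //.
  have : (f @^-1` Wset U p.2 d `&` @cube R n) p.1 by split => //; case: Dp.
  by rewrite -eZ1; case.
by rewrite subrr normr0.
Qed.

Lemma const_cont n a : realization K a -> cont_into K (@cube R n) (fun _ => a).
Proof.
move=> ha; split => // U Uo; exists [set _ | U a]; split => //.
case: (pselect (U a)) => h.
  have -> : [set _ : 'rV[R]_n | U a] = setT by apply/seteqP; split.
  exact: openT.
have -> : [set _ : 'rV[R]_n | U a] = set0 by apply/seteqP; split.
exact: open0.
Qed.

Lemma hh_fix a t : rr a = a -> hh a t = a.
Proof. by move=> e; apply/funext => v; rewrite /hh e subrr mulr0 addr0. Qed.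

Lemma weq : incl_weak_equiv R L K.
Proof.
split.
  move=> a ha; exists (rr a); first exact: (rr_inL HK HKc HXY HaX HaY H1 H2 H3).
  exists (fun p => hh a p.2); split; last split.
  - exact: (hh_cont (const_cont 0 ha)).
  - by move=> x _; rewrite hh0 hh1.
  - by move=> x t [_ [[i hi] _]].
move=> n b hb; split.
  move=> f [fc fb]; exists (fun x => rr (f x)).
    split; first exact: rr_cont fc.
    by move=> x bx; rewrite fb // (rr_L aX aY hb).
  exists (fun p => hh (f p.1) p.2); split; last split.
  - exact: hh_cont fc.
  - by move=> x _; rewrite hh0 hh1.
  - by move=> x t bx _; rewrite /= fb // hh_fix // (rr_L aX aY hb).
move=> f g [fc fb] [gc gb] [H [Hc [H01 Hb]]].
exists (fun p => rr (H p)); split; last split.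
- exact: rr_cont Hc.
- move=> x cx; have [e0 e1] := H01 x cx; rewrite /= e0 e1.
  by rewrite (rr_L aX aY (fc.1 x cx)) (rr_L aX aY (gc.1 x cx)).
- by move=> x t bx t01; rewrite /= Hb // (rr_L aX aY hb).
Qed.

End Topo.
Unset Implicit Arguments.

Theorem proposition9p6 (R : realType) (V : choiceType) (K : set {fset V})
    (X Y : set V) (aX aY : V) :
  is_complex K -> is_clique K ->
  X `|` Y = vertices K ->
  (X `&` Y) aX -> (X `&` Y) aY ->
  (forall tau, edge K tau -> card_in tau (X `&` Y) = 1%N ->
     card_in tau (X `\` (X `&` Y)) = 1%N -> K (fsetU tau [fset aX]%fset)) ->
  (forall tau, edge K tau -> card_in tau (X `&` Y) = 1%N ->
     card_in tau (Y `\` (X `&` Y)) = 1%N -> K (fsetU tau [fset aY]%fset)) ->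
  (forall tau, edge K tau -> ~ Pset K X Y tau -> K (fsetU tau [fset aX; aY]%fset)) ->
  (forall sigma, K sigma -> ~ Pset K X Y sigma ->
     central (St K sigma (X `&` Y)) [fset aX; aY]%fset) /\
  incl_weak_equiv R (full_sub K X `|` full_sub K Y) K.
Proof.
move=> HK HKc HXY HaX HaY H1 H2 H3; split.
  move=> sigma Ks nP; exact: (central_part HK HKc HXY HaX HaY H1 H2 H3 Ks nP).
exact: (weq R HK HKc HXY HaX HaY H1 H2 H3).
Qed.
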